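(* Let $X$ be a set and $f:X\to X$ a map. The functional Alexandroff topology on $X$ associated to $f$ is uniformizable if and only if $\mathrm{Per}(f)=X$.
   Context: For $a\in X$, $V_f(a):=\{x\in X:\exists n\ge0,\ f^n(x)=a\}$; the functional Alexandroff topology associated to $f$ is the topology on $X$ with basis $\{V_f(a):a\in X\}$. $\mathrm{Per}(f)=\{x\in X:\exists n\ge1,\ f^n(x)=x\}$. A topology is uniformizable if it is induced by some uniform structure on $X$. *)

(* Defs.v *)
From Stdlib Require Import Arith.

Set Implicit Arguments.

Definition iter_fun {X : Type} (f : X -> X) (n : nat) (x : X) : X := Nat.iter n f x.

Definition Vf {X : Type} (f : X -> X) (a : X) : X -> Prop :=
  fun x => exists n : nat, iter_fun f n x = a.

Definition Per {X : Type} (f : X -> X) : X -> Prop :=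
  fun x => exists n : nat, 1 <= n /\ iter_fun f n x = x.

(* Open sets of the topology generated by the basis {V_f(a) : a in X}:
   unions of basis elements. *)
Definition falex_open {X : Type} (f : X -> X) (U : X -> Prop) : Prop :=
  forall x, U x -> exists a, Vf f a x /\ (forall y, Vf f a y -> U y).

Definition is_uniformity {X : Type} (E : (X -> X -> Prop) -> Prop) : Prop :=
  E (fun _ _ => True) /\
  (forall U V, E U -> (forall x y, U x y -> V x y) -> E V) /\
  (forall U V, E U -> E V -> E (fun x y => U x y /\ V x y)) /\
  (forall U x, E U -> U x x) /\
  (forall U, E U -> E (fun x y => U y x)) /\
  (forall U, E U -> exists V, E V /\
       (forall x y z, V x y -> V y z -> U x z)).

Definition unif_open {X : Type} (E : (X -> X -> Prop) -> Prop) (A : X -> Prop) : Prop :=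
  forall x, A x -> exists U, E U /\ (forall y, U x y -> A y).

Definition uniformizable {X : Type} (is_open : (X -> Prop) -> Prop) : Prop :=
  exists E, is_uniformity E /\ (forall A, unif_open E A <-> is_open A).

(* Main.v *)
Require Import Defs.
From Stdlib Require Import Arith Lia.

Lemma it_add {X} (f : X -> X) n m x : iter_fun f (n + m) x = iter_fun f n (iter_fun f m x).
Proof. unfold iter_fun. induction n; simpl; [reflexivity| now rewrite IHn]. Qed.

Lemma it_S {X} (f : X -> X) n x : iter_fun f (S n) x = iter_fun f n (f x).
Proof. replace (S n) with (n + 1) by lia. rewrite it_add. reflexivity. Qed.

Lemma it_mul {X} (f : X -> X) p x : iter_fun f p x = x -> forall k, iter_fun f (k * p) x = x.
Proof. intros H k; induction k; simpl; [reflexivity|]. rewrite it_add, IHk; exact H. Qed.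

Theorem mainTheorem9 (X : Type) (f : X -> X) :
  uniformizable (falex_open f) <-> (forall x : X, Per f x).
Proof.
  split.
  - intros [E [[HT [Hmono [Hand [Hdiag [Hsym Hsq]]]]] Hiff]] x.
    assert (Ox : falex_open f (Vf f x)).
    { intros y Hy. exists x. split; [exact Hy|]. tauto. }
    apply Hiff in Ox. destruct (Ox x (ex_intro _ 0 eq_refl)) as [U [HU HUx]].
    set (T := fun a b => U b a).
    assert (HTe : E T) by (apply Hsym; exact HU).
    set (O := fun w => exists W, E W /\ forall v, W w v -> T (f x) v).
    assert (HO : unif_open E O).
    { intros z [W [HW HWz]]. destruct (Hsq W HW) as [W2 [HW2 Hc]].
      exists W2. split; [exact HW2|]. intros w Hw. exists W2. split; [exact HW2|].
      intros v Hv. apply HWz. eapply Hc; eauto. }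
    apply Hiff in HO.
    assert (Ofx : O (f x)) by (exists T; split; auto).
    destruct (HO _ Ofx) as [a [[n Hn] Ha]].
    assert (Ox' : O x) by (apply Ha; exists (S n); rewrite it_S; exact Hn).
    destruct Ox' as [W [HW HWx]].
    specialize (HWx x (Hdiag W x HW)). unfold T in HWx.
    destruct (HUx _ HWx) as [m Hm]. exists (S m). split; [lia|]. rewrite it_S; exact Hm.
  - intros HP.
    set (R := fun x y => Vf f x y).
    assert (Rsym : forall x y, R x y -> R y x).
    { intros x y [n Hn]. destruct (HP y) as [p [Hp Hpy]].
      exists (n * p - n). rewrite <- Hn, <- it_add.
      replace (n * p - n + n) with (n * p) by nia. apply it_mul; exact Hpy. }
    assert (Rtr : forall x y z, R x y -> R y z -> R x z).
    { intros x y z [n Hn] [m Hm]. exists (n + m). rewrite it_add, Hm; exact Hn. }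
    exists (fun U => forall x y, R x y -> U x y). split.
    + repeat split.
      * intros U V HU HV x y H; auto.
      * auto.
      * auto.
      * intros U x HU. apply HU. exists 0. reflexivity.
      * intros U HU x y H. apply HU, Rsym, H.
      * intros U HU. exists R. split; [auto|]. intros x y z H1 H2. apply HU. eapply Rtr; eauto.
    + intros A. split.
      * intros HA x Ax. destruct (HA x Ax) as [U [HU HUA]].
        exists x. split; [exists 0; reflexivity|]. intros y Hy. apply HUA, HU, Hy.
      * intros HA x Ax. destruct (HA x Ax) as [a [[m Hm] Ha]].
        exists R. split; [auto|]. intros y [n Hn]. apply Ha. exists (m + n).
        rewrite it_add, Hn; exact Hm.
Qed.
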